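(* For all integers $n\ge1$ the following hold in the $q$-shuffle algebra $\mathbb V$: $$\sum_{k=0}^n G_k\star\tilde G_{n-k}\,q^{n-2k}=q\sum_{k=0}^{n-1}W_{-k}\star W_{n-k}\,q^{n-1-2k},$$ $$\sum_{k=0}^n G_k\star\tilde G_{n-k}\,q^{2k-n}=q\sum_{k=0}^{n-1}W_{n-k}\star W_{-k}\,q^{n-1-2k},$$ $$\sum_{k=0}^n \tilde G_k\star G_{n-k}\,q^{n-2k}=q\sum_{k=0}^{n-1}W_{n-k}\star W_{-k}\,q^{2k+1-n},$$ $$\sum_{k=0}^n \tilde G_k\star G_{n-k}\,q^{2k-n}=q\sum_{k=0}^{n-1}W_{-k}\star W_{n-k}\,q^{2k+1-n}.$$
   Context: Let $\mathbb F$ be a field and let $q\in\mathbb F$ be nonzero and not a root of unity. Let $\mathbb V$ be the free associative $\mathbb F$-algebra on noncommuting $x,y$, with basis the words (including $1$). Juxtaposition denotes concatenation. Set $\langle x,x\rangle=\langle y,y\rangle=2$ and $\langle x,y\rangle=\langle y,x\rangle=-2$. The $q$-shuffle product $\star$ is the bilinear product determined as follows: - $1\star v=v\star 1=v$; - for nontrivial words $u=u_1\cdots u_r$ and $v=v_1\cdots v_s$, $$u\star v=u_1((u_2\cdots u_r)\star v)+v_1(u\star(v_2\cdots v_s))q^{\langle u_1,v_1\rangle+\cdots+\langle u_r,v_1\rangle}.$$ This makes $\mathbb V$ an associative algebra, the $q$-shuffle algebra. For $k\in\mathbb N$: - $W_{-k}=xyx\cdots x$ is the alternating word of length $2k+1$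 beginning and ending with $x$; - $W_{k+1}=yxy\cdots y$ is the alternating word of length $2k+1$ beginning and ending with $y$; - $G_k=yxyx\cdots yx$ is the word of length $2k$; - $\tilde G_k=xyxy\cdots xy$ is the word of length $2k$; - $G_0=\tilde G_0=1$. *)

(* Defs.v *)
From mathcomp Require Import all_boot all_order all_algebra.
Set Implicit Arguments. Unset Strict Implicit. Unset Printing Implicit Defensive.
Import Order.TTheory GRing.Theory Num.Theory.
Local Open Scope ring_scope.

(* Letters: false = x, true = y.  Words = seq bool (concatenation = ++). *)
Definition word := seq bool.

Definition qform (a b : bool) : int := if a == b then (2%N)%:Z else - (2%N)%:Z.

Definition qwt (u : word) (b : bool) : int := \sum_(a <- u) qform a b.

Section QShuffle.
Variable F : fieldType.
Variable q : F.

(* An element of the free algebra V = a formal F-linear combination of words,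
   represented by a finite list of (coefficient, word) pairs; two lists
   represent the same element iff all their coefficients [coefV] agree. *)
Definition V := seq (F * word).

Definition coefV (X : V) (w : word) : F := \sum_(p <- X | p.2 == w) p.1.

Definition eqV (X Y : V) : Prop := forall w, coefV X w = coefV Y w.

Definition wordV (w : word) : V := [:: (1, w)].
Definition addV (X Y : V) : V := X ++ Y.
Definition scaleV (c : F) (X : V) : V := [seq (c * p.1, p.2) | p <- X].
Definition sumV (n : nat) (f : nat -> V) : V := flatten [seq f k | k <- iota 0 n].

Fixpoint qsh (u : word) : word -> V :=
  match u with
  | [::] => fun v => [:: (1, v)]
  | a :: u' =>
      fix qsh2 (v : word) : V :=
        match v with
        | [::] => [:: (1, a :: u')]
        | b :: v' =>
            [seq (p.1, a :: p.2) | p <- qsh u' v]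
            ++ [seq (p.1 * q ^ qwt (a :: u') b, b :: p.2) | p <- qsh2 v']
        end
  end.

Definition starV (X Y : V) : V :=
  flatten [seq flatten [seq [seq (p.1 * r.1 * s.1, s.2) | s <- qsh p.2 r.2]
                           | r <- Y] | p <- X].

End QShuffle.
Arguments wordV {F} w.
Arguments sumV {F} n f.

(* W_{-k} = xyx...x of length 2k+1 *)
Definition Wneg (k : nat) : word := mkseq (fun i => odd i) (2 * k + 1).
(* W_{k+1} = yxy...y of length 2k+1 *)
Definition Wpos1 (k : nat) : word := mkseq (fun i => ~~ odd i) (2 * k + 1).
(* G_k = yxyx...yx of length 2k *)
Definition G (k : nat) : word := mkseq (fun i => ~~ odd i) (2 * k).
(* tilde G_k = xyxy...xy of length 2k *)
Definition Gt (k : nat) : word := mkseq (fun i => odd i) (2 * k).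

(* Main.v *)
Require Import Defs.
From mathcomp Require Import all_boot all_order all_algebra.
From mathcomp Require Import zify ring lra.
Set Implicit Arguments. Unset Strict Implicit. Unset Printing Implicit Defensive.
Import GRing.Theory Num.Theory.
Local Open Scope ring_scope.

Lemma mkseqS T (f : nat -> T) n : mkseq f n.+1 = f 0%N :: mkseq (fun i => f i.+1) n.
Proof.
rewrite /mkseq /= -[1%N]/(1 + 0)%N iotaDl -map_comp; congr (_ :: _).
Qed.

Lemma G0 : G 0 = [::]. Proof. by []. Qed.
Lemma Gt0 : Gt 0 = [::]. Proof. by []. Qed.
Lemma GS k : G k.+1 = true :: Wneg k.
Proof.
rewrite /G /Wneg (_ : (2 * k.+1 = (2 * k + 1).+1)%N); last lia.
rewrite mkseqS; congr (_ :: _); apply: eq_mkseq => i /=; exact: negbK.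
Qed.
Lemma GtS k : Gt k.+1 = false :: Wpos1 k.
Proof.
rewrite /Gt /Wpos1 (_ : (2 * k.+1 = (2 * k + 1).+1)%N); last lia.
by rewrite mkseqS.
Qed.
Lemma NE k : Wneg k = false :: G k.
Proof.
rewrite /G /Wneg (_ : (2 * k + 1 = (2 * k).+1)%N); last lia.
by rewrite mkseqS.
Qed.
Lemma PE k : Wpos1 k = true :: Gt k.
Proof.
rewrite /Gt /Wpos1 (_ : (2 * k + 1 = (2 * k).+1)%N); last lia.
rewrite mkseqS; congr (_ :: _); apply: eq_mkseq => i /=; exact: negbK.
Qed.

Lemma qwt_cons a u b : qwt (a :: u) b = qform a b + qwt u b.
Proof. by rewrite /qwt big_cons. Qed.
Lemma qwt_nil b : qwt [::] b = 0.
Proof. by rewrite /qwt big_nil. Qed.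

Lemma qform_tf b : qform true b + qform false b = 0.
Proof. by case: b. Qed.

Lemma qwt_G k b : qwt (G k) b = 0.
Proof.
elim: k => [|k IH]; first by rewrite G0 qwt_nil.
by rewrite GS NE !qwt_cons IH addr0 qform_tf.
Qed.
Lemma qwt_Gt k b : qwt (Gt k) b = 0.
Proof.
elim: k => [|k IH]; first by rewrite Gt0 qwt_nil.
by rewrite GtS PE !qwt_cons IH addr0 addrC qform_tf.
Qed.
Lemma qwt_N k b : qwt (Wneg k) b = qform false b.
Proof. by rewrite NE qwt_cons qwt_G addr0. Qed.
Lemma qwt_P k b : qwt (Wpos1 k) b = qform true b.
Proof. by rewrite PE qwt_cons qwt_Gt addr0. Qed.
Section Sem.
Variable F : fieldType.
Variable q : F.
Hypothesis hq : q != 0.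

Definition S u v w := coefV (qsh q u v) w.

Lemma coefV_cat (X Y : V F) w : coefV (X ++ Y) w = coefV X w + coefV Y w.
Proof. by rewrite /coefV big_cat. Qed.

Lemma coefV_single v w : coefV [:: ((1 : F), v)] w = (v == w)%:R.
Proof. by rewrite /coefV big_cons big_nil /=; case: (v == w); rewrite ?addr0. Qed.

Lemma coefV_map1 (X : V F) a c w :
  coefV [seq (p.1, a :: p.2) | p <- X] (c :: w) = (a == c)%:R * coefV X w.
Proof.
rewrite /coefV big_map; case: eqP => [<-|ne].
  by rewrite mul1r; apply: eq_big => p //=; rewrite eqseq_cons eqxx.
rewrite mul0r big1 // => p /=; rewrite eqseq_cons => /andP[/eqP]; done.
Qed.

Lemma coefV_map2 (X : V F) a t c w :
  coefV [seq (p.1 * t, a :: p.2) | p <- X] (c :: w) = (a == c)%:R * t * coefV X w.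
Proof.
rewrite /coefV big_map; case: eqP => [<-|ne].
  rewrite mul1r mulr_sumr; apply: eq_big => p /=; first by rewrite eqseq_cons eqxx.
  by rewrite mulrC.
rewrite !mul0r big1 // => p /=; rewrite eqseq_cons => /andP[/eqP]; done.
Qed.

Lemma qsh_cc a u b v : qsh q (a :: u) (b :: v) =
  [seq (p.1, a :: p.2) | p <- qsh q u (b :: v)]
  ++ [seq (p.1 * q ^ qwt (a :: u) b, b :: p.2) | p <- qsh q (a :: u) v].
Proof. by []. Qed.

Lemma S_nil_l v w : S [::] v w = (v == w)%:R.
Proof. by rewrite /S /= coefV_single. Qed.
Lemma S_nil_r u w : S u [::] w = (u == w)%:R.
Proof. by case: u => [|a u]; rewrite /S /= coefV_single. Qed.

Lemma S_nil u v : (0 < size u + size v)%N -> S u v [::] = 0.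
Proof.
case: u => [|a u]; case: v => [|b v] //= _.
- by rewrite S_nil_l.
- by rewrite S_nil_r.
rewrite /S qsh_cc coefV_cat /coefV !big_map !big1 ?addr0 //.
Qed.

Definition starts (u : word) c := if u is a :: _ then a == c else false.

Lemma S_cons u v c w : S u v (c :: w) =
  (starts u c)%:R * S (behead u) v w + (starts v c)%:R * q ^ qwt u c * S u (behead v) w.
Proof.
case: u => [|a u]; case: v => [|b v] /=.
- by rewrite !S_nil_l !mul0r ?addr0.
- rewrite !S_nil_l qwt_nil expr0z mul0r add0r mulr1 eqseq_cons.
  by case: (b == c); case: (v == w); rewrite /= ?mul1r ?mul0r.
- rewrite !S_nil_r eqseq_cons /=.
  by case: (a == c); case: (u == w); rewrite /= ?mul0r ?mul1r ?mulr0n ?mulr1n ?addr0 ?mulr0 ?mul0r ?addr0.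
rewrite /S qsh_cc coefV_cat coefV_map1 coefV_map2.
by case: (b =P c) => [->|_] //=; rewrite !mul0r.
Qed.

Lemma starts_Gf k : starts (G k) false = false.
Proof. by case: k => [|k]; rewrite ?GS. Qed.
Lemma starts_Gtt k : starts (Gt k) true = false.
Proof. by case: k => [|k]; rewrite ?GtS. Qed.

Lemma starts_N k c : starts (Wneg k) c = (false == c). Proof. by rewrite NE. Qed.
Lemma starts_P k c : starts (Wpos1 k) c = (true == c). Proof. by rewrite PE. Qed.
Lemma behead_N k : behead (Wneg k) = G k. Proof. by rewrite NE. Qed.
Lemma behead_P k : behead (Wpos1 k) = Gt k. Proof. by rewrite PE. Qed.
Ltac pg := match goal with |- ?g => idtac "GOAL" g end.
Ltac simpS := rewrite S_cons /=; rewrite ?starts_Gf ?starts_Gtt ?starts_N ?starts_P ?behead_N ?behead_P /=;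
  rewrite ?qwt_G ?qwt_Gt ?qwt_N ?qwt_P /qform ?expr0z /= ?mulr0n ?mulr1n ?mul0r ?mul1r ?mulr1 ?add0r ?addr0;
  rewrite -?GS -?GtS ?qwt_G ?qwt_Gt ?qwt_nil ?expr0z ?mul1r.

Notation m2 := (- (2%N)%:Z : int).
Notation p2 := ((2%N)%:Z : int).

Lemma Sa k w : S (G k.+1) (Gt 0) (false :: w) = 0.
Proof. by rewrite GS Gt0; simpS. Qed.
Lemma Sb k j w : S (G k) (Gt j.+1) (false :: w) = S (G k) (Wpos1 j) w.
Proof. by rewrite GtS; simpS. Qed.
Lemma Sc k j w : S (Wneg k) (Wpos1 j) (false :: w) = S (G k) (Wpos1 j) w.
Proof. by simpS. Qed.
Lemma Sd j w : S (G 0) (Gt j) (true :: w) = 0.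
Proof. by rewrite G0; simpS. Qed.
Lemma Se k j w : S (G k.+1) (Gt j) (true :: w) = S (Wneg k) (Gt j) w.
Proof. by rewrite GS; simpS. Qed.
Lemma Sf k j w : S (Wneg k) (Wpos1 j) (true :: w) = q ^ m2 * S (Wneg k) (Gt j) w.
Proof. by simpS. Qed.
Lemma Sg k j w : S (Wpos1 j) (Wneg k) (false :: w) = q ^ m2 * S (Wpos1 j) (G k) w.
Proof. by simpS. Qed.
Lemma Sh k j w : S (Wpos1 j) (Wneg k) (true :: w) = S (Gt j) (Wneg k) w.
Proof. by simpS. Qed.
Lemma Si j w : S (Gt 0) (G j) (false :: w) = 0.
Proof. by rewrite Gt0; simpS. Qed.
Lemma Sj k j w : S (Gt k.+1) (G j) (false :: w) = S (Wpos1 k) (G j) w.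
Proof. by rewrite GtS; simpS. Qed.
Lemma Sk k w : S (Gt k.+1) (G 0) (true :: w) = 0.
Proof. by rewrite GtS G0; simpS. Qed.
Lemma Sl k j w : S (Gt k) (G j.+1) (true :: w) = S (Gt k) (Wneg j) w.
Proof. by rewrite GS; simpS. Qed.
Lemma Sm1 k j w : S (G k) (Wpos1 j) (false :: w) = 0.
Proof. by simpS. Qed.
Lemma Sm2 k j w : S (Wpos1 k) (G j) (false :: w) = 0.
Proof. by simpS. Qed.
Lemma Sn k j w : S (G k) (Wpos1 j) (true :: w) =
  S (G k) (Gt j) w + (if k is k'.+1 then S (Wneg k') (Wpos1 j) w else 0).
Proof. case: k => [|k]; rewrite ?G0 ?GS ; simpS; rewrite ?PE ?G0 //. by rewrite addrC. Qed.
Lemma So k j w : S (Wpos1 k) (G j) (true :: w) =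
  S (Gt k) (G j) w + (if j is j'.+1 then q ^ p2 * S (Wpos1 k) (Wneg j') w else 0).
Proof. case: j => [|j]; rewrite ?G0 ?GS ; simpS; rewrite ?PE ?G0 //. Qed.
Lemma Sp1 k j w : S (Wneg k) (Gt j) (true :: w) = 0.
Proof. by case: j => [|j]; rewrite ?Gt0 ?GtS; simpS. Qed.
Lemma Sp2 k j w : S (Gt k) (Wneg j) (true :: w) = 0.
Proof. by case: k => [|k]; rewrite ?Gt0 ?GtS; simpS. Qed.
Lemma Sr k j w : S (Wneg k) (Gt j) (false :: w) =
  S (G k) (Gt j) w + (if j is j'.+1 then q ^ p2 * S (Wneg k) (Wpos1 j') w else 0).
Proof. case: j => [|j]; rewrite ?Gt0 ?GtS ; simpS; rewrite ?NE ?Gt0 //. Qed.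
Lemma Ss k j w : S (Gt k) (Wneg j) (false :: w) =
  S (Gt k) (G j) w + (if k is k'.+1 then S (Wpos1 k') (Wneg j) w else 0).
Proof. case: k => [|k]; rewrite ?Gt0 ?GtS ; simpS; rewrite ?NE ?Gt0 //. by rewrite addrC. Qed.
Lemma qN1 (b : int) x : q * (q ^ b * x) = q ^ (1 + b) * x.
Proof. by rewrite mulrA expfzDr // expr1z. Qed.
Lemma qN2 (a b : int) x : q ^ a * (q ^ b * x) = q ^ (a + b) * x.
Proof. by rewrite mulrA expfzDr. Qed.
Lemma qE (a b : int) x : a = b -> q ^ a * x = q ^ b * x.
Proof. by move=> ->. Qed.

Lemma sum_rev m (f : nat -> F) :
  \sum_(0 <= k < m.+1) f k = \sum_(0 <= k < m.+1) f (m - k)%N.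
Proof. by rewrite big_nat_rev; apply: eq_bigr => k _; rewrite add0n subSS. Qed.

Lemma size_G k : size (G k) = (2 * k)%N. Proof. by rewrite size_mkseq. Qed.
Lemma size_Gt k : size (Gt k) = (2 * k)%N. Proof. by rewrite size_mkseq. Qed.
Lemma size_N k : size (Wneg k) = (2 * k + 1)%N. Proof. by rewrite size_mkseq. Qed.
Lemma size_P k : size (Wpos1 k) = (2 * k + 1)%N. Proof. by rewrite size_mkseq. Qed.

Definition I1 n w := \sum_(0 <= k < n.+1) q ^ (n%:Z - (2 * k)%:Z) * S (G k) (Gt (n - k)) w
  = q * \sum_(0 <= k < n) q ^ ((n - 1)%:Z - (2 * k)%:Z) * S (Wneg k) (Wpos1 (n - 1 - k)) w.
Definition I2 n w := \sum_(0 <= k < n.+1) q ^ ((2 * k)%:Z - n%:Z) * S (G k) (Gt (n - k)) w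
  = q * \sum_(0 <= k < n) q ^ ((n - 1)%:Z - (2 * k)%:Z) * S (Wpos1 (n - 1 - k)) (Wneg k) w.
Definition I3 n w := \sum_(0 <= k < n.+1) q ^ (n%:Z - (2 * k)%:Z) * S (Gt k) (G (n - k)) w
  = q * \sum_(0 <= k < n) q ^ ((2 * k + 1)%:Z - n%:Z) * S (Wpos1 (n - 1 - k)) (Wneg k) w.
Definition I4 n w := \sum_(0 <= k < n.+1) q ^ ((2 * k)%:Z - n%:Z) * S (Gt k) (G (n - k)) w
  = q * \sum_(0 <= k < n) q ^ ((2 * k + 1)%:Z - n%:Z) * S (Wneg k) (Wpos1 (n - 1 - k)) w.
Definition IA m w := \sum_(0 <= k < m.+1) q ^ (2 * k)%:Z * S (G k) (Wpos1 (m - k)) w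
  = \sum_(0 <= k < m.+1) q ^ (2 * k)%:Z * S (Wpos1 k) (G (m - k)) w.
Definition IB m w := \sum_(0 <= k < m.+1) q ^ (2 * k)%:Z * S (Wneg k) (Gt (m - k)) w
  = \sum_(0 <= k < m.+1) q ^ (2 * k)%:Z * S (Gt k) (Wneg (m - k)) w.

Lemma I1_cons m c w : I1 m.+1 (c :: w).
Proof.
rewrite /I1; have -> : (m.+1 - 1 = m)%N by lia.
case: c.
- rewrite big_nat_recl // Sd mulr0 add0r mulr_sumr.
  apply: eq_bigr => k _; rewrite Se Sf subSS qN2 qN1; apply: qE; lia.
- rewrite big_nat_recr //= subnn Sa mulr0 addr0 mulr_sumr.
  apply: eq_big_nat => k /andP[_ hk].
  rewrite (_ : (m.+1 - k = (m - k).+1)%N); last lia.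
  rewrite Sb Sc qN1; apply: qE; lia.
Qed.

Lemma I3_cons m c w : I3 m.+1 (c :: w).
Proof.
rewrite /I3; have -> : (m.+1 - 1 = m)%N by lia.
case: c.
- rewrite big_nat_recr //= subnn Sk mulr0 addr0 mulr_sumr [RHS]sum_rev.
  apply: eq_big_nat => k /andP[_ hk].
  rewrite (_ : (m.+1 - k = (m - k).+1)%N); last lia.
  rewrite (_ : (m - (m - k) = k)%N); last lia.
  rewrite Sl Sh qN1; apply: qE; lia.
- rewrite big_nat_recl // Si mulr0 add0r mulr_sumr [RHS]sum_rev.
  apply: eq_big_nat => k /andP[_ hk].
  rewrite (_ : (m - (m - k) = k)%N); last lia.
  rewrite subSS Sj Sg qN2 qN1; apply: qE; lia.
Qed.

Lemma I2_cons m c w : IA m w -> IB m w -> I2 m.+1 (c :: w).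
Proof.
rewrite /I2 /IA /IB => hA hB; have -> : (m.+1 - 1 = m)%N by lia.
case: c.
- rewrite big_nat_recl // Sd mulr0 add0r.
  transitivity (q ^ (1 - m%:Z) * \sum_(0 <= k < m.+1) q ^ (2 * k)%:Z * S (Wneg k) (Gt (m - k)) w).
    rewrite mulr_sumr; apply: eq_bigr => k _; rewrite subSS Se qN2; apply: qE; lia.
  rewrite hB !mulr_sumr [RHS]sum_rev; apply: eq_big_nat => k /andP[_ hk].
  rewrite (_ : (m - (m - k) = k)%N); last lia.
  rewrite Sh qN2 qN1; apply: qE; lia.
- rewrite big_nat_recr //= subnn Sa mulr0 addr0.
  transitivity (q ^ (- (m.+1)%:Z) * \sum_(0 <= k < m.+1) q ^ (2 * k)%:Z * S (G k) (Wpos1 (m - k)) w).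
    rewrite mulr_sumr; apply: eq_big_nat => k /andP[_ hk].
    rewrite (_ : (m.+1 - k = (m - k).+1)%N); last lia.
    rewrite Sb qN2; apply: qE; lia.
  rewrite hA !mulr_sumr [RHS]sum_rev; apply: eq_big_nat => k /andP[_ hk].
  rewrite (_ : (m - (m - k) = k)%N); last lia.
  rewrite Sg qN2 qN2 qN1; apply: qE; lia.
Qed.

Lemma I4_cons m c w : IA m w -> IB m w -> I4 m.+1 (c :: w).
Proof.
rewrite /I4 /IA /IB => hA hB; have -> : (m.+1 - 1 = m)%N by lia.
case: c.
- rewrite big_nat_recr //= subnn Sk mulr0 addr0.
  transitivity (q ^ (- (m.+1)%:Z) * \sum_(0 <= k < m.+1) q ^ (2 * k)%:Z * S (Gt k) (Wneg (m - k)) w).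
    rewrite mulr_sumr; apply: eq_big_nat => k /andP[_ hk].
    rewrite (_ : (m.+1 - k = (m - k).+1)%N); last lia.
    rewrite Sl qN2; apply: qE; lia.
  rewrite -hB !mulr_sumr; apply: eq_big_nat => k /andP[_ hk].
  rewrite Sf qN2 qN2 qN1; apply: qE; lia.
- rewrite big_nat_recl // Si mulr0 add0r.
  transitivity (q ^ (1 - m%:Z) * \sum_(0 <= k < m.+1) q ^ (2 * k)%:Z * S (Wpos1 k) (G (m - k)) w).
    rewrite mulr_sumr; apply: eq_bigr => k _; rewrite subSS Sj qN2; apply: qE; lia.
  rewrite -hA !mulr_sumr; apply: eq_big_nat => k /andP[_ hk].
  rewrite Sc qN2 qN1; apply: qE; lia.
Qed.

Lemma PK p (g : nat -> nat -> F) :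
  \sum_(0 <= k < p.+2) q ^ (2 * k)%:Z * (if k is k'.+1 then g k' (p.+1 - k)%N else 0)
  = \sum_(0 <= k < p.+1) q ^ (2 * k + 2)%:Z * g k (p - k)%N.
Proof.
rewrite big_nat_recl // mulr0 add0r; apply: eq_bigr => k _.
by rewrite subSS (_ : (2 * k.+1 = 2 * k + 2)%N) //; lia.
Qed.

Lemma PJ p (g : nat -> nat -> F) :
  \sum_(0 <= k < p.+2) q ^ (2 * k)%:Z * (if (p.+1 - k)%N is j'.+1 then q ^ p2 * g k j' else 0)
  = \sum_(0 <= k < p.+1) q ^ (2 * k + 2)%:Z * g k (p - k)%N.
Proof.
rewrite big_nat_recr //= subnn mulr0 addr0; apply: eq_big_nat => k /andP[_ hk].
rewrite (_ : (p.+1 - k = (p - k).+1)%N) /=; last lia.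
rewrite qN2; apply: qE; lia.
Qed.

Lemma LX p w : I2 p.+1 w ->
  \sum_(0 <= k < p.+2) q ^ (2 * k)%:Z * S (G k) (Gt (p.+1 - k)) w
  = \sum_(0 <= k < p.+1) q ^ (2 * k + 2)%:Z * S (Wpos1 k) (Wneg (p - k)) w.
Proof.
rewrite /I2 => h2.
transitivity (q ^ (p.+1)%:Z * \sum_(0 <= k < p.+2) q ^ ((2 * k)%:Z - (p.+1)%:Z) * S (G k) (Gt (p.+1 - k)) w).
  rewrite mulr_sumr; apply: eq_bigr => k _; rewrite qN2; apply: qE; lia.
rewrite h2 !mulr_sumr [LHS]sum_rev; apply: eq_big_nat => k /andP[_ hk].
rewrite (_ : (p.+1 - 1 - (p - k) = k)%N); last lia.
rewrite qN1 qN2; apply: qE; lia.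
Qed.

Lemma LZ p w : I4 p.+1 w ->
  \sum_(0 <= k < p.+2) q ^ (2 * k)%:Z * S (Gt k) (G (p.+1 - k)) w
  = \sum_(0 <= k < p.+1) q ^ (2 * k + 2)%:Z * S (Wneg k) (Wpos1 (p - k)) w.
Proof.
rewrite /I4 => h4.
transitivity (q ^ (p.+1)%:Z * \sum_(0 <= k < p.+2) q ^ ((2 * k)%:Z - (p.+1)%:Z) * S (Gt k) (G (p.+1 - k)) w).
  rewrite mulr_sumr; apply: eq_bigr => k _; rewrite qN2; apply: qE; lia.
rewrite h4 !mulr_sumr; apply: eq_big_nat => k /andP[_ hk].
rewrite (_ : (p.+1 - 1 - k = p - k)%N); last lia.
rewrite qN1 qN2; apply: qE; lia.
Qed.

Lemma IA_cons p c w : I2 p.+1 w -> I4 p.+1 w -> IA p.+1 (c :: w).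
Proof.
rewrite /IA => h2 h4; case: c.
- under eq_bigr => k _ do rewrite Sn mulrDr.
  under [RHS]eq_bigr => k _ do rewrite So mulrDr.
  rewrite !big_split /= (LX h2) (LZ h4).
  rewrite (PK p (fun a b => S (Wneg a) (Wpos1 b) w)).
  rewrite (PJ p (fun a b => S (Wpos1 a) (Wneg b) w)).
  by rewrite addrC.
- by rewrite !big1 // => k _; rewrite ?Sm1 ?Sm2 mulr0.
Qed.

Lemma IB_cons p c w : I2 p.+1 w -> I4 p.+1 w -> IB p.+1 (c :: w).
Proof.
rewrite /IB => h2 h4; case: c.
- by rewrite !big1 // => k _; rewrite ?Sp1 ?Sp2 mulr0.
- under eq_bigr => k _ do rewrite Sr mulrDr.
  under [RHS]eq_bigr => k _ do rewrite Ss mulrDr.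
  rewrite !big_split /= (LX h2) (LZ h4).
  rewrite (PK p (fun a b => S (Wpos1 a) (Wneg b) w)).
  rewrite (PJ p (fun a b => S (Wneg a) (Wpos1 b) w)).
  by rewrite addrC.
Qed.

Lemma main w : forall m, [/\ IA m w, IB m w & (0 < m)%N -> I2 m w /\ I4 m w].
Proof.
elim: w => [|c w IH] m.
  split; rewrite /IA /IB /I2 /I4.
  - by rewrite !big1 // => k _; rewrite S_nil ?mulr0 // ?size_P ?size_N; lia.
  - by rewrite !big1 // => k _; rewrite S_nil ?mulr0 // ?size_P ?size_N; lia.
  move=> hm; split; rewrite !big1 ?mulr0 // => k _; rewrite S_nil ?mulr0 //
    ?size_P ?size_N ?size_G ?size_Gt; lia.
case: m => [|p].
  split=> //; rewrite /IA /IB !big_nat1 ?G0 ?Gt0 ?S_nil_l ?S_nil_r //.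
have [hA hB _] := IH p.
have [_ _ /(_ isT) [h2 h4]] := IH p.+1.
split; [exact: IA_cons | exact: IB_cons | move=> _; split].
- exact: I2_cons.
- exact: I4_cons.
Qed.

Lemma I1_all n w : (0 < n)%N -> I1 n w.
Proof.
case: n => // m _; case: w => [|c w]; last exact: I1_cons.
rewrite /I1 !big1 ?mulr0 // => k _; rewrite S_nil ?mulr0 //
    ?size_P ?size_N ?size_G ?size_Gt; lia.
Qed.
Lemma I3_all n w : (0 < n)%N -> I3 n w.
Proof.
case: n => // m _; case: w => [|c w]; last exact: I3_cons.
rewrite /I3 !big1 ?mulr0 // => k _; rewrite S_nil ?mulr0 //
    ?size_P ?size_N ?size_G ?size_Gt; lia.
Qed.

Lemma coefV_sumV (N : nat) (f : nat -> V F) w :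
  coefV (sumV N f) w = \sum_(0 <= k < N) coefV (f k) w.
Proof. by rewrite /sumV /coefV big_flatten /= big_map /index_iota subn0. Qed.

Lemma coefV_scaleV c (X : V F) w : coefV (scaleV c X) w = c * coefV X w.
Proof.
rewrite /scaleV /coefV big_map mulr_sumr; exact: eq_bigr.
Qed.

Lemma coefV_star u v w : coefV (starV q (wordV u) (wordV v)) w = S u v w.
Proof.
rewrite /starV /wordV /= !cats0 /S /coefV big_map.
by apply: eq_bigr => p _; rewrite !mul1r.
Qed.

End Sem.

Theorem proposition8p1 (F : fieldType) (q : F) (n : nat) :
  q != 0 -> (forall m : nat, (0 < m)%N -> q ^+ m != 1) -> (1 <= n)%N ->
  [/\ eqV (sumV (n.+1) (fun k => scaleV (q ^ (n%:Z - (2 * k)%:Z))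
                              (starV q (wordV (G k)) (wordV (Gt (n - k))))))
          (scaleV q (sumV n (fun k => scaleV (q ^ ((n - 1)%:Z - (2 * k)%:Z))
                              (starV q (wordV (Wneg k)) (wordV (Wpos1 (n - 1 - k))))))),
      eqV (sumV (n.+1) (fun k => scaleV (q ^ ((2 * k)%:Z - n%:Z))
                              (starV q (wordV (G k)) (wordV (Gt (n - k))))))
          (scaleV q (sumV n (fun k => scaleV (q ^ ((n - 1)%:Z - (2 * k)%:Z))
                              (starV q (wordV (Wpos1 (n - 1 - k))) (wordV (Wneg k)))))),
      eqV (sumV (n.+1) (fun k => scaleV (q ^ (n%:Z - (2 * k)%:Z))
                              (starV q (wordV (Gt k)) (wordV (G (n - k))))))
          (scaleV q (sumV n (fun k => scaleV (q ^ ((2 * k + 1)%:Z - n%:Z))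
                              (starV q (wordV (Wpos1 (n - 1 - k))) (wordV (Wneg k))))))
    & eqV (sumV (n.+1) (fun k => scaleV (q ^ ((2 * k)%:Z - n%:Z))
                              (starV q (wordV (Gt k)) (wordV (G (n - k))))))
          (scaleV q (sumV n (fun k => scaleV (q ^ ((2 * k + 1)%:Z - n%:Z))
                              (starV q (wordV (Wneg k)) (wordV (Wpos1 (n - 1 - k))))))) ].
Proof.
move=> hq _ hn.
have [_ _ /(_ hn) [h2 h4]] := main hq [::] n.
split=> w; rewrite coefV_scaleV !coefV_sumV;
  under eq_bigr => k _ do rewrite coefV_scaleV coefV_star;
  under [in RHS]eq_bigr => k _ do rewrite coefV_scaleV coefV_star.
- exact: I1_all.
- by have [_ _ /(_ hn) []] := main hq w n.
- exact: I3_all.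
- by have [_ _ /(_ hn) []] := main hq w n.
Qed.
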